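(* Let $\mathcal{X}\subseteq\mathbb{R}^d$ be nonempty, closed and convex, let $f:\mathbb{R}^d\to\mathbb{R}$ be differentiable, $L$-smooth and strictly convex, and assume $\mathcal{X}_\star:=\operatorname{arg\,min}_{x\in\mathcal{X}} f(x)$ is nonempty. Let $x_0\in\mathcal{X}$, $x_\star\in\mathcal{X}_\star$, and let $\{x_k\}_{k\ge0}$ be generated by the Local LMO iteration $x_{k+1}\in\operatorname{arg\,min}_{z\in\mathcal{X}\cap\mathcal{B}(x_k,t_k)}\langle\nabla f(x_k),z\rangle$ with radii $t_k=\|\nabla f(x_k)-\nabla f(x_\star)\|/L$. Then for every $K\ge1$, $$\min_{0\le k\le K-1}\|\nabla f(x_k)-\nabla f(x_\star)\|^2\le\frac1K\sum_{k=0}^{K-1}\|\nabla f(x_k)-\nabla f(x_\star)\|^2\le\frac{L^2\|x_0-x_\star\|^2}{K}.$$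
   Context: $\|\cdot\|$ is the Euclidean norm, $\mathcal{B}(x,t):=\{y:\|y-x\|\le t\}$. $f$ is $L$-smooth if $\|\nabla f(x)-\nabla f(y)\|\le L\|x-y\|$ for all $x,y$. *)

(* Defs.v *)
From HB Require Import structures.
From mathcomp Require Import all_boot all_order all_algebra.
From mathcomp Require Import all_classical all_reals all_analysis.
Set Implicit Arguments. Unset Strict Implicit. Unset Printing Implicit Defensive.
Import Order.TTheory GRing.Theory Num.Theory.
Import numFieldNormedType.Exports.
Local Open Scope classical_set_scope.
Local Open Scope ring_scope.

Section Defs.
Variables (R : realType) (d : nat).

Definition dotp (u v : 'rV[R]_d) : R := \sum_(i < d) u 0 i * v 0 i.
Definition enorm (u : 'rV[R]_d) : R := Num.sqrt (dotp u u).

Definition eball (x : 'rV[R]_d) (t : R) : set 'rV[R]_d :=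
  [set y | enorm (y - x) <= t].

Definition grad (f : 'rV[R]_d -> R) (x : 'rV[R]_d) : 'rV[R]_d :=
  \row_(i < d) ('D_(delta_mx 0 i) f x).

Definition strictly_convex (f : 'rV[R]_d -> R) : Prop :=
  forall x y (t : R), x != y -> 0 < t < 1 ->
    f (t *: x + (1 - t) *: y) < t * f x + (1 - t) * f y.

Definition L_smooth (L : R) (f : 'rV[R]_d -> R) : Prop :=
  forall x y, enorm (grad f x - grad f y) <= L * enorm (x - y).

Definition argmin_on (S : set 'rV[R]_d) (g : 'rV[R]_d -> R) : set 'rV[R]_d :=
  [set z | S z /\ forall y, S y -> g z <= g y].

End Defs.

(* Main.v *)
Require Import Defs.
From HB Require Import structures.
From mathcomp Require Import all_boot all_order all_algebra.
From mathcomp Require Import all_classical all_reals all_analysis.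
From mathcomp Require Import ring lra.
Set Implicit Arguments. Unset Strict Implicit. Unset Printing Implicit Defensive.
Import Order.TTheory GRing.Theory Num.Theory.
Import numFieldNormedType.Exports.
Local Open Scope classical_set_scope.
Local Open Scope ring_scope.

Section S.
Variables (R : realType) (d : nat).
Implicit Types u v w : 'rV[R]_d.
Local Notation dot := (@dotp R d).

Lemma dotpC u v : dot u v = dot v u.
Proof. by apply: eq_bigr => i _; rewrite mulrC. Qed.
Lemma dotpDl u v w : dot (u + v) w = dot u w + dot v w.
Proof. by rewrite /dotp -big_split; apply: eq_bigr => i _; rewrite !mxE mulrDl. Qed.
Lemma dotpZl (a : R) u w : dot (a *: u) w = a * dot u w.
Proof. by rewrite /dotp mulr_sumr; apply: eq_bigr => i _; rewrite !mxE mulrA. Qed.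
Lemma dotpNl u w : dot (- u) w = - dot u w.
Proof. by rewrite -scaleN1r dotpZl mulN1r. Qed.
Lemma dotpBl u v w : dot (u - v) w = dot u w - dot v w.
Proof. by rewrite dotpDl dotpNl. Qed.
Lemma dotpDr u v w : dot w (u + v) = dot w u + dot w v.
Proof. by rewrite dotpC dotpDl !(dotpC w). Qed.
Lemma dotpZr (a : R) u w : dot w (a *: u) = a * dot w u.
Proof. by rewrite dotpC dotpZl dotpC. Qed.
Lemma dotpNr u w : dot w (- u) = - dot w u.
Proof. by rewrite dotpC dotpNl dotpC. Qed.
Lemma dotpBr u v w : dot w (u - v) = dot w u - dot w v.
Proof. by rewrite dotpDr dotpNr. Qed.
Lemma dotpp_ge0 u : 0 <= dot u u.
Proof. by apply: sumr_ge0 => i _; rewrite -expr2 sqr_ge0. Qed.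
Lemma enorm_sq u : enorm u ^+ 2 = dot u u.
Proof. by rewrite /enorm sqr_sqrtr // dotpp_ge0. Qed.
Lemma enorm_ge0 u : 0 <= enorm u.
Proof. exact: sqrtr_ge0. Qed.
Lemma dotp0 u : dot u u = 0 -> u = 0.
Proof.
move=> /eqP; rewrite psumr_eq0; last by move=> i _; rewrite -expr2 sqr_ge0.
move=> /allP H; apply/rowP => i; rewrite mxE.
by have := H i (mem_index_enum i); rewrite -expr2 sqrf_eq0 => /eqP.
Qed.

Lemma dir_grad (f : 'rV[R]_d -> R) x v : differentiable f x ->
  'D_v f x = dot (grad f x) v.
Proof.
move=> df; rewrite deriveE // {1}(row_sum_delta v) linear_sum /dotp.
apply: eq_bigr => i _; rewrite linearZ /= mxE -deriveE // mulrC.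
by [].
Qed.

Lemma line_derive (f : 'rV[R]_d -> R) x v s : differentiable f (x + s *: v) ->
  is_derive s 1 (fun r : R => f (x + r *: v)) (dot (grad f (x + s *: v)) v).
Proof.
move=> df.
have E : (fun h : R => h^-1 *: (((fun r : R => f (x + r *: v)) \o shift s) (h *: 1) - f (x + s *: v)))
   = (fun h : R => h^-1 *: ((f \o shift (x + s *: v)) (h *: v) - f (x + s *: v))).
  apply: funext => h /=; congr (_ *: (f _ - _)).
  by rewrite scaler1 scalerDl addrCA addrA.
have dv : derivable f (x + s *: v) v by exact: diff_derivable.
split.
  by rewrite /derivable E.
by rewrite /derive E -/(derive f (x + s *: v) v) dir_grad.
Qed.

Lemma right_deriv_ge (h : R -> R) (D M : R) : is_derive (0:R) (1:R) h D ->
  (forall s, 0 < s < 1 -> M * s <= h s - h 0) -> M <= D.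
Proof.
move=> [dh <-] H.
have C := cvg_dnbhs_at_right dh.
apply: (cvgr_to_ge C).
near=> r.
have r0 : 0 < r by near: r; exact: nbhs_right_gt.
have r1 : r < 1 by near: r; exact: nbhs_right_lt.
rewrite /= scaler1 addr0 /GRing.scale /=.
rewrite ler_pdivlMl // mulrC; apply: H; lra.
Unshelve. all: by end_near.
Qed.

Lemma right_deriv_le (h : R -> R) (D M : R) : is_derive (0:R) (1:R) h D ->
  (forall s, 0 < s < 1 -> h s - h 0 <= M * s) -> D <= M.
Proof.
move=> [dh <-] H.
have C := cvg_dnbhs_at_right dh.
apply: (cvgr_to_le C).
near=> r.
have r0 : 0 < r by near: r; exact: nbhs_right_gt.
have r1 : r < 1 by near: r; exact: nbhs_right_lt.
rewrite /= scaler1 addr0 /GRing.scale /=.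
rewrite ler_pdivrMl // mulrC; apply: H; lra.
Unshelve. all: by end_near.
Qed.
Lemma quad_bound (h dh : R -> R) (a b : R) :
  (forall s : R, is_derive s (1:R) h (dh s)) ->
  (forall s, 0 < s < 1 -> dh s <= a + b * s) ->
  h 1 - h 0 <= a + b / 2.
Proof.
move=> Hd Hb.
have Dpsi := fun s : R => is_deriveB (is_deriveB (Hd s) (is_deriveZ a (is_derive_id s (1:R))))
   (is_deriveZ (b/2) (is_deriveX 2 (is_derive_id s (1:R)))).
have cont := derivable_within_continuous (i := `[0, 1]) (fun s _ => (Dpsi s).(ex_derive)).
have [c c01 E] := MVT (ltr01 : (0:R) < 1) (fun s _ => Dpsi s) cont.
have /andP[c0 c1] : 0 < c < 1 by move: c01; rewrite in_itv.
have := Hb c; rewrite c0 c1 => /(_ isT) Hc.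
move: E; rewrite !fctE /= !scaler0 !scaler1 /GRing.scale /= expr1n expr0n /= expr1 => E.
nra.
Qed.
End S.

Lemma cvx (R : realType) d (X : set 'rV[R]_d) (x y : 'rV[R]_d) (s : R) :
  convex_set X -> X x -> X y -> 0 <= s <= 1 -> X (s *: x + (1 - s) *: y).
Proof.
move=> cX Xx Xy /andP[s0 s1].
have := cX x y (Itv01 s0 s1).
rewrite !inE => /(_ Xx Xy). by [].
Qed.

Section Main.
Variables (R : realType) (d : nat) (f : 'rV[R]_d -> R) (L : R).
Hypotheses (fd : forall y, differentiable f y) (L0 : 0 < L) (Ls : L_smooth L f)
  (fc : strictly_convex f).
Local Notation dot := (@dotp R d).
Local Notation g := (grad f).

Lemma seg_eq (x y : 'rV[R]_d) (s : R) : x + s *: (y - x) = s *: y + (1 - s) *: x.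
Proof. by apply/rowP => i; rewrite !mxE; ring. Qed.

Lemma conv_first x y : f x + dot (g x) (y - x) <= f y.
Proof.
have D0 := @line_derive _ _ f x (y - x) 0 (fd _).
rewrite scale0r addr0 in D0.
have := @right_deriv_le _ _ _ (f y - f x) D0.
have H : forall s : R, 0 < s < 1 -> f (x + s *: (y - x)) - f (x + 0 *: (y - x)) <= (f y - f x) * s.
  move=> s /andP[s0 s1]; rewrite scale0r addr0 seg_eq.
  have [->|xy] := eqVneq y x.
    by rewrite -scalerDl (addrC s) subrK scale1r !subrr mul0r.
  have := @fc y x s xy; rewrite s0 s1 => /(_ isT) H; apply/ltW; lra.
by move=> /(_ H); lra.
Qed.

Lemma amgm u w (c : R) : 0 < c -> 2 * c * dot u w <= dot u u + c ^+ 2 * dot w w.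
Proof.
move=> c0; have := dotpp_ge0 (u - c *: w).
rewrite !(dotpBl, dotpBr, dotpZl, dotpZr) (dotpC w u); nra.
Qed.

Lemma descent x y : f y <= f x + dot (g x) (y - x) + L / 2 * dot (y - x) (y - x).
Proof.
set v := y - x.
have Hd := fun s : R => @line_derive _ _ f x v s (fd _).
have := @quad_bound _ _ _ (dot (g x) v) (L * dot v v) Hd.
have H : forall s : R, 0 < s < 1 -> dot (g (x + s *: v)) v <= dot (g x) v + L * dot v v * s.
  move=> s /andP[s0 s1].
  set D := g (x + s *: v) - g x.
  have HL := Ls (x + s *: v) x.
  rewrite addrAC subrr add0r in HL.
  have e1 := enorm_ge0 D; have e2 := enorm_ge0 (s *: v).
  have HL2 : enorm D ^+ 2 <= L ^+ 2 * enorm (s *: v) ^+ 2.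
    rewrite -exprMn; apply: lerXn2r; rewrite ?nnegrE //; nra.
  rewrite !enorm_sq dotpZl dotpZr in HL2.
  have := amgm D v (mulr_gt0 L0 s0).
  have vv := dotpp_ge0 v.
  have ED : dot D v = dot (g (x + s *: v)) v - dot (g x) v by rewrite dotpBl.
  move=> H2.
  have K : 2 * (L * s) * dot D v <= 2 * (L * s) * (L * dot v v * s).
    have -> : 2 * (L * s) * (L * dot v v * s) = 2 * (L ^+ 2 * (s * (s * dot v v))) by ring.
    have E2 : (L * s) ^+ 2 * dot v v = L ^+ 2 * (s * (s * dot v v)) by ring.
    lra.
  rewrite ler_pM2l in K; last by rewrite !mulr_gt0.
  lra.
have -> : x + 1 *: v = y by rewrite scale1r /v addrC subrK.
move=> /(_ H); rewrite scale0r addr0; lra.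
Qed.

Lemma half x y : f x + dot (g x) (y - x) + dot (g y - g x) (g y - g x) / (2 * L) <= f y.
Proof.
have [D eD] : exists D, D = g y - g x by exists (g y - g x).
rewrite -eD.
have c1 := conv_first x (y - L^-1 *: D).
have c2 := descent y (y - L^-1 *: D).
have E1 : y - L^-1 *: D - x = (y - x) - L^-1 *: D by rewrite addrAC.
have E2 : y - L^-1 *: D - y = - (L^-1 *: D) by rewrite addrC addKr.
rewrite E1 dotpBr dotpZr in c1.
rewrite E2 !(dotpNl, dotpNr, dotpZl, dotpZr, opprK) in c2.
have ED : dot D D = dot (g y) D - dot (g x) D by rewrite {1}eD dotpBl.
have Ln : L != 0 by rewrite gt_eqF.
have E3 : L / 2 * (L^-1 * (L^-1 * dot D D)) = dot D D / (2 * L) by field.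
have E4 : dot D D / (2 * L) = L^-1 * dot D D / 2 by field.
have E5 : L^-1 * dot (g y) D - L^-1 * dot (g x) D = L^-1 * dot D D by rewrite ED; ring.
lra.
Qed.

Lemma cocoercive x y : dot (g x - g y) (g x - g y) / L <= dot (g x - g y) (x - y).
Proof.
have h1 := half x y; have h2 := half y x.
have E : dot (g x - g y) (g x - g y) = dot (g y - g x) (g y - g x).
  by rewrite -opprB dotpNl dotpNr opprK.
have F1 : dot (g x) (x - y) = - dot (g x) (y - x) by rewrite -dotpNr opprB.
have F : dot (g x - g y) (x - y) = - dot (g x) (y - x) - dot (g y) (x - y).
  by rewrite dotpBl F1.
have Ln : L != 0 by rewrite gt_eqF.
have H : dot (g y - g x) (g y - g x) / (2 * L) + dot (g y - g x) (g y - g x) / (2 * L)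
   = dot (g y - g x) (g y - g x) / L by field.
rewrite F E; rewrite E in h2; lra.
Qed.
End Main.

Section Alg.
Variables (R : realType) (d : nat).
Local Notation dot := (@dotp R d).
Implicit Types u v w m e hh : 'rV[R]_d.

Lemma dot_expand u v (c : R) : dot (u - c *: v) (u - c *: v) = dot u u - 2 * c * dot u v + c ^+ 2 * dot v v.
Proof. rewrite !(dotpBl, dotpBr, dotpZl, dotpZr) (dotpC v u); ring. Qed.

Lemma dot_expandD u v (c : R) : dot (u + c *: v) (u + c *: v) = dot u u + 2 * c * dot u v + c ^+ 2 * dot v v.
Proof. rewrite !(dotpDl, dotpDr, dotpZl, dotpZr) (dotpC v u); ring. Qed.

Lemma dot_expandB u v : dot (u - v) (u - v) = dot u u - 2 * dot u v + dot v v.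
Proof. by have := dot_expand u v 1; rewrite scale1r expr1n !mul1r mulr1. Qed.

Lemma alg_A m e hh (L t : R) : 0 < L -> dot e e <= t ^+ 2 -> t ^+ 2 = dot hh hh / L ^+ 2 ->
  dot hh hh / L <= dot hh m -> dot hh hh / L <= dot hh e ->
  dot (m - e) (m - e) <= dot m m - t ^+ 2.
Proof.
move=> L0 ee tt hm he.
have Ln : L != 0 by rewrite gt_eqF.
have Z : dot (e - L^-1 *: hh) (e - L^-1 *: hh) = 0.
  apply/eqP; rewrite eq_le dotpp_ge0 andbT dot_expand (dotpC e hh).
  have E1 : L^-1 ^+ 2 * dot hh hh = dot hh hh / L ^+ 2 by rewrite exprVn mulrC.
  have E2 : 2 * L^-1 * dot hh e = 2 * (dot hh e / L) by ring.
  have E3 : dot hh hh / L ^+ 2 = (dot hh hh / L) / L by rewrite expr2 invfM mulrA.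
  have : (dot hh hh / L) / L <= dot hh e / L by rewrite ler_pM2r ?invr_gt0.
  lra.
have /dotp0 /eqP : dot (e - L^-1 *: hh) (e - L^-1 *: hh) = 0 by [].
rewrite subr_eq0 => /eqP ->.
rewrite dot_expand.
have E1 : L^-1 ^+ 2 * dot hh hh = dot hh hh / L ^+ 2 by rewrite exprVn mulrC.
have E2 : 2 * L^-1 * dot m hh = 2 * (dot hh m / L) by rewrite (dotpC m hh); ring.
have E3 : dot hh hh / L ^+ 2 = (dot hh hh / L) / L by rewrite expr2 invfM mulrA.
have : (dot hh hh / L) / L <= dot hh m / L by rewrite ler_pM2r ?invr_gt0.
lra.
Qed.

Lemma alg_B u w (t : R) : dot u u <= t ^+ 2 ->
  0 < t ^+ 2 + dot u u - 2 * dot u w ->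
  forall lam, lam = (t ^+ 2 + dot u u - 2 * dot u w) /
     ((t ^+ 2 + dot u u - 2 * dot u w) + dot (w - u) (w - u) + 1) ->
  dot (u + lam *: (w - u)) (u + lam *: (w - u)) <= t ^+ 2.
Proof.
move=> uu E0 lam.
set E := t ^+ 2 + dot u u - 2 * dot u w in E0 *.
set C := dot (w - u) (w - u).
move=> ->; set lam' := E / (E + C + 1).
clear lam; rename lam' into lam.
have C0 : 0 <= C by apply: dotpp_ge0.
have S0 : 0 < E + C + 1 by lra.
have lS : lam * (E + C + 1) = E by rewrite /lam mulfVK // gt_eqF.
have l0 : 0 <= lam by rewrite /lam divr_ge0 //; lra.
have l1 : lam <= 1 by rewrite /lam ler_pdivrMr //; lra.
rewrite dot_expandD.
have EC : C = dot w w - 2 * dot u w + dot u u by rewrite /C dot_expandB (dotpC w u).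
have Eu : dot u (w - u) = dot u w - dot u u by rewrite dotpBr.
rewrite Eu.
have K : t ^+ 2 - (dot u u + 2 * lam * (dot u w - dot u u) + lam ^+ 2 * C)
   = (t ^+ 2 - dot u u) * (1 - lam) + lam ^+ 2 * (E + 1).
  have H : lam * (lam * (E + C + 1)) = lam * E by rewrite lS.
  have H2 : lam * E = lam * (t ^+ 2 + dot u u - 2 * dot u w) by [].
  nra.
have : 0 <= (t ^+ 2 - dot u u) * (1 - lam) + lam ^+ 2 * (E + 1).
  apply: addr_ge0; first by apply: mulr_ge0; lra.
  by apply: mulr_ge0; [exact: sqr_ge0| lra].
rewrite -/C; lra.
Qed.
End Alg.

Section Main2.
Variables (R : realType) (d : nat) (f : 'rV[R]_d -> R) (L : R).
Hypotheses (fd : forall y, differentiable f y) (L0 : 0 < L) (Ls : L_smooth L f)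
  (fc : strictly_convex f).
Local Notation dot := (@dotp R d).
Local Notation g := (grad f).

Lemma first_order (X : set 'rV[R]_d) xs : convex_set X -> argmin_on X f xs ->
  forall z, X z -> 0 <= dot (g xs) (z - xs).
Proof.
move=> cX [Xxs Hmin] z Xz.
have D0 := @line_derive _ _ f xs (z - xs) 0 (fd _).
rewrite scale0r addr0 in D0.
apply: (@right_deriv_ge _ _ _ 0 D0) => s /andP[s0 s1].
rewrite mul0r scale0r addr0 subr_ge0 seg_eq; apply: Hmin; apply: cvx => //.
by rewrite !ltW.
Qed.

Lemma enorm_le u (t : R) : 0 <= t -> dot u u <= t ^+ 2 -> enorm u <= t.
Proof.
move=> t0 H; rewrite /enorm -[X in _ <= X](ger0_norm t0) -sqrtr_sqr.
by rewrite ler_sqrt // sqr_ge0.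
Qed.

Lemma key_step (X : set 'rV[R]_d) xs xk p : convex_set X -> argmin_on X f xs -> X xk ->
  argmin_on (X `&` eball xk (enorm (g xk - g xs) / L)) (fun z => dot (g xk) z) p ->
  dot (p - xs) (p - xs) <= dot (xk - xs) (xk - xs) - dot (g xk - g xs) (g xk - g xs) / L ^+ 2.
Proof.
move=> cX hxs Xk [[Xp Bp] Hp].
have [hh ehh] : exists hh, hh = g xk - g xs by eexists.
rewrite -ehh in Bp Hp *.
set t := enorm hh / L in Bp Hp.
have t0 : 0 <= t by rewrite /t divr_ge0 ?enorm_ge0 // ltW.
have tt : t ^+ 2 = dot hh hh / L ^+ 2 by rewrite /t expr_div_n enorm_sq.
rewrite -tt.
have F1 : dot (p - xk) (p - xk) <= t ^+ 2.
  rewrite -enorm_sq; apply: lerXn2r; rewrite ?nnegrE ?enorm_ge0 //.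
have F3 := cocoercive fd L0 Ls fc xk xs; rewrite -ehh in F3.
have F4 := first_order cX hxs Xp.
have [A|B] := leP 0 (dot (g xk) (xs - p)).
  have H1 : 0 <= dot hh (xs - p).
    rewrite ehh dotpBl.
    have : dot (g xs) (xs - p) = - dot (g xs) (p - xs) by rewrite -dotpNr opprB.
    lra.
  have H2 : dot hh (xk - p) = dot hh (xk - xs) + dot hh (xs - p).
    by rewrite -dotpDr addrA subrK.
  have F1' : dot (xk - p) (xk - p) <= t ^+ 2 by rewrite -opprB dotpNl dotpNr opprK.
  have E : p - xs = (xk - xs) - (xk - p) by apply/rowP => i; rewrite !mxE; ring.
  rewrite E; apply: (alg_A L0 F1' tt) => //; lra.
have [//|Hc] := leP (dot (p - xs) (p - xs)) (dot (xk - xs) (xk - xs) - t ^+ 2).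
exfalso.
have [u eu] : exists u, u = p - xk by eexists.
have [w ew] : exists w, w = xs - xk by eexists.
have E1 : p - xs = u - w by rewrite eu ew; apply/rowP => i; rewrite !mxE; ring.
have E2 : xk - xs = - w by rewrite ew opprB.
rewrite E1 E2 dotpNl dotpNr opprK dot_expandB in Hc.
rewrite -eu in F1.
have E0 : 0 < t ^+ 2 + dot u u - 2 * dot u w by lra.
set E := t ^+ 2 + dot u u - 2 * dot u w in E0.
set C := dot (w - u) (w - u).
set lam := E / (E + C + 1).
have Hz := alg_B F1 E0 (erefl lam).
have C0 : 0 <= C by apply: dotpp_ge0.
have S0 : 0 < E + C + 1 by lra.
have l0 : 0 < lam by rewrite /lam divr_gt0.
have l1 : lam <= 1 by rewrite /lam ler_pdivrMr //; lra.
have Xz : X (lam *: xs + (1 - lam) *: p).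
  by apply: cvx => //; [exact: hxs.1 | rewrite (ltW l0) l1].
have Ez : lam *: xs + (1 - lam) *: p - xk = u + lam *: (w - u).
  by rewrite eu ew; apply/rowP => i; rewrite !mxE; ring.
have Bz : eball xk t (lam *: xs + (1 - lam) *: p).
  by rewrite /eball /= Ez; apply: enorm_le.
have := Hp _ (conj Xz Bz).
have Ez2 : lam *: xs + (1 - lam) *: p = p + lam *: (xs - p).
  by apply/rowP => i; rewrite !mxE; ring.
rewrite Ez2 dotpDr dotpZr => H.
have : 0 <= lam * dot (g xk) (xs - p) by lra.
by rewrite pmulr_rge0 // leNgt B.
Qed.
End Main2.

Unset Implicit Arguments.

Theorem theorem2 (R : realType) (d : nat) (X : set 'rV[R]_d)
  (f : 'rV[R]_d -> R) (L : R) (x : nat -> 'rV[R]_d) (xstar : 'rV[R]_d) :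
  X !=set0 -> closed X -> convex_set X ->
  (forall y, differentiable f y) -> 0 < L -> L_smooth L f -> strictly_convex f ->
  argmin_on X f !=set0 ->
  X (x 0%N) -> argmin_on X f xstar ->
  (forall k : nat,
     argmin_on (X `&` eball (x k) (enorm (grad f (x k) - grad f xstar) / L))
               (fun z => dotp (grad f (x k)) z) (x k.+1)) ->
  forall K : nat, (1 <= K)%N ->
    let a := fun k : nat => enorm (grad f (x k) - grad f xstar) ^+ 2 in
    \big[Num.min/a 0%N]_(k < K) a k <= K%:R^-1 * \sum_(k < K) a k /\
    K%:R^-1 * \sum_(k < K) a k <= L ^+ 2 * enorm (x 0%N - xstar) ^+ 2 / K%:R.
Proof.
move=> _ _ cX fd L0 Ls fc _ X0 hxs Hit K K1 a.
have Xk : forall k, X (x k).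
  by elim=> [//|k _]; have [[Xp _] _] := Hit k.
have Ln : L != 0 by rewrite gt_eqF.
set D := fun k => dotp (x k - xstar) (x k - xstar).
have step : forall k, L ^+ 2 * D k.+1 <= L ^+ 2 * D k - a k.
  move=> k; have := key_step fd L0 Ls fc cX hxs (Xk k) (Hit k).
  rewrite /a enorm_sq /D => H.
  have L2 : 0 < L ^+ 2 by rewrite exprn_gt0.
  have : L ^+ 2 * dotp (x k.+1 - xstar) (x k.+1 - xstar) <=
         L ^+ 2 * (dotp (x k - xstar) (x k - xstar) -
           dotp (grad f (x k) - grad f xstar) (grad f (x k) - grad f xstar) / L ^+ 2).
    by rewrite ler_pM2l.
  have -> : L ^+ 2 * (dotp (x k - xstar) (x k - xstar) -
           dotp (grad f (x k) - grad f xstar) (grad f (x k) - grad f xstar) / L ^+ 2)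
     = L ^+ 2 * dotp (x k - xstar) (x k - xstar) -
           dotp (grad f (x k) - grad f xstar) (grad f (x k) - grad f xstar).
    by field.
  by [].
have sumb : forall n, \sum_(k < n) a k + L ^+ 2 * D n <= L ^+ 2 * D 0%N.
  elim=> [|n IH]; first by rewrite big_ord0 add0r.
  rewrite big_ord_recr /=; have := step n; lra.
have Dge0 : forall n, 0 <= D n by move=> n; apply: dotpp_ge0.
have SK : \sum_(k < K) a k <= L ^+ 2 * D 0%N.
  have := sumb K; have : 0 <= L ^+ 2 * D K by rewrite mulr_ge0 ?sqr_ge0.
  lra.
have K0 : 0 < K%:R :> R by rewrite ltr0n.
split.
  have Hm : forall k : 'I_K, \big[Num.min/a 0%N]_(k < K) a k <= a k.
    by move=> k; apply: bigmin_le.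
  have : \sum_(k < K) \big[Num.min/a 0%N]_(k < K) a k <= \sum_(k < K) a k.
    by apply: ler_sum => k _; apply: Hm.
  rewrite sumr_const card_ord => H.
  rewrite ler_pdivlMl // mulr_natl //.
rewrite enorm_sq -/(D 0%N) mulrC ler_wpM2r // invr_ge0 ltW //.
Qed.
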